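(* For every $\Delta^0_2$ set $X$ with $\emptyset'\not\leq_T X$, there exists a $\Delta^0_2$ function $f:\omega\to\omega$ such that $X$ computes no function $g:\omega\to\omega$ with $g(x)\neq f(x)$ for all $x\in\omega$.
   Context: A set or function is $\Delta^0_2$ if it is computable from $\emptyset'$. A function $g$ with $g(x)\neq f(x)$ for all $x$ is called $f$-diagonalizing. *)

(* Defs.v *)
From Stdlib Require Import Arith Cantor ClassicalEpsilon.

Definition pair (x y : nat) : nat := Cantor.to_nat (x, y).
Definition unL (n : nat) : nat := fst (Cantor.of_nat n).
Definition unR (n : nat) : nat := snd (Cantor.of_nat n).

(* Syntax of oracle partial recursive functions (unary, via pairing). *)
Inductive prf : Type :=
| PZero : prf
| PSucc : prf
| PLeft : prf
| PRight : prf
| POracle : prf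
| PPair : prf -> prf -> prf
| PComp : prf -> prf -> prf
| PRec : prf -> prf -> prf
| PMu : prf -> prf.

Inductive eval (A : nat -> bool) : prf -> nat -> nat -> Prop :=
| ev_zero x : eval A PZero x 0
| ev_succ x : eval A PSucc x (S x)
| ev_left x : eval A PLeft x (unL x)
| ev_right x : eval A PRight x (unR x)
| ev_oracle x : eval A POracle x (if A x then 1 else 0)
| ev_pair f g x a b :
    eval A f x a -> eval A g x b -> eval A (PPair f g) x (pair a b)
| ev_comp f g x y z :
    eval A g x y -> eval A f y z -> eval A (PComp f g) x z
| ev_rec0 f g x y :
    eval A f x y -> eval A (PRec f g) (pair x 0) y
| ev_recS f g x n y z :
    eval A (PRec f g) (pair x n) y ->
    eval A g (pair x (pair n y)) z ->
    eval A (PRec f g) (pair x (S n)) z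
| ev_mu f x n :
    eval A f (pair x n) 0 ->
    (forall m, m < n -> exists k, eval A f (pair x m) (S k)) ->
    eval A (PMu f) x n.

Definition computable_in (A : nat -> bool) (f : nat -> nat) : Prop :=
  exists e : prf, forall x, eval A e x (f x).

Definition turing_red (B A : nat -> bool) : Prop :=
  computable_in A (fun x => if B x then 1 else 0).

(* Goedel numbering of programs (injective, computable, decidable image). *)
Fixpoint code (e : prf) : nat :=
  match e with
  | PZero => pair 0 0
  | PSucc => pair 1 0
  | PLeft => pair 2 0
  | PRight => pair 3 0
  | POracle => pair 4 0
  | PPair f g => pair 5 (pair (code f) (code g))
  | PComp f g => pair 6 (pair (code f) (code g))
  | PRec f g => pair 7 (pair (code f) (code g))
  | PMu f => pair 8 (code f)
  end.

Definition empty_set : nat -> bool := fun _ => false.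

Definition halts (A : nat -> bool) (e : prf) (x : nat) : Prop :=
  exists y, eval A e x y.

Definition in_jump0 (n : nat) : Prop :=
  exists e : prf, code e = n /\ halts empty_set e n.

(* Characteristic function of emptyset' (classical: the set is not decidable). *)
Definition jump0 : nat -> bool :=
  fun n => if excluded_middle_informative (in_jump0 n) then true else false.

Definition Delta02_set (X : nat -> bool) : Prop := turing_red X jump0.
Definition Delta02_fun (f : nat -> nat) : Prop := computable_in jump0 f.

Definition diagonalizing (f g : nat -> nat) : Prop := forall x, g x <> f x.

(* Main.v *)
Require Import Defs.
From Stdlib Require Import Arith Cantor ClassicalEpsilon Lia List.

Lemma unL_pair a b : unL (pair a b) = a.
Proof. unfold unL, pair. now rewrite cancel_of_to. Qed.
Lemma unR_pair a b : unR (pair a b) = b.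
Proof. unfold unR, pair. now rewrite cancel_of_to. Qed.
Lemma pair_un n : pair (unL n) (unR n) = n.
Proof. unfold unL, unR, pair. rewrite <- surjective_pairing. apply cancel_to_of. Qed.
Lemma pair_le a b : a + b <= pair a b.
Proof. unfold pair. pose proof (to_nat_non_decreasing a b). lia. Qed.
Lemma pair_inj a b c d : pair a b = pair c d -> a = c /\ b = d.
Proof. intro H. split. rewrite <- (unL_pair a b), H; apply unL_pair. rewrite <- (unR_pair a b), H; apply unR_pair. Qed.

Lemma code_inj : forall e1 e2, code e1 = code e2 -> e1 = e2.
Proof.
  induction e1; destruct e2; simpl; intro H; try reflexivity;
  repeat match goal with H : pair _ _ = pair _ _ |- _ => apply pair_inj in H; destruct H end;
  try discriminate; try (f_equal; auto).
Qed.

Lemma eval_det : forall A e x y1, eval A e x y1 -> forall y2, eval A e x y2 -> y1 = y2.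
Proof.
  fix IH 5. intros A e x y1 H. destruct H; intros y2 H2;
  match type of H2 with eval _ _ ?i _ => remember i as ii eqn:Eii in H2 end;
  inversion H2; subst ii; subst; auto.
  all: repeat match goal with H : pair _ _ = pair _ _ |- _ => apply pair_inj in H; destruct H; subst end.
  all: try discriminate.
  all: try match goal with H : S _ = S _ |- _ => injection H as H; subst end.
  - f_equal; eapply IH; eassumption.
  - match goal with K1 : eval A g x ?w, K2 : eval A f ?w y2 |- _ =>
      pose proof (IH _ _ _ _ H _ K1); subst; exact (IH _ _ _ _ H0 _ K2) end.
  - match goal with K1 : eval A f x y2 |- _ => exact (IH _ _ _ _ H _ K1) end.
  - match goal with K1 : eval A (PRec f g) (pair x n) ?w, K2 : eval A g _ y2 |- _ =>
      pose proof (IH _ _ _ _ H _ K1); subst; exact (IH _ _ _ _ H0 _ K2) end.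
  - match goal with H4 : eval A f (pair x y2) 0, H5 : forall m, m < y2 -> _ |- _ =>
    destruct (lt_eq_lt_dec n y2) as [[Hl|Hl]|Hl]; auto;
    [ destruct (H5 _ Hl) as [k Hk]; specialize (IH _ _ _ _ H _ Hk); discriminate
    | destruct (H0 _ Hl) as [k Hk]; specialize (IH _ _ _ _ Hk _ H4); discriminate ] end.
Qed.
Fixpoint natrec (F G : nat -> nat) (x n : nat) : nat :=
  match n with 0 => F x | S m => G (pair x (pair m (natrec F G x m))) end.

Fixpoint sem (A : nat -> bool) (P : prf) (x : nat) : nat :=
  match P with
  | PZero => 0 | PSucc => S x | PLeft => unL x | PRight => unR x
  | POracle => if A x then 1 else 0
  | PPair f g => pair (sem A f x) (sem A g x)
  | PComp f g => sem A f (sem A g x)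
  | PRec f g => natrec (sem A f) (sem A g) (unL x) (unR x)
  | PMu _ => 0
  end.

Fixpoint mufree (P : prf) : Prop :=
  match P with
  | PPair f g | PComp f g | PRec f g => mufree f /\ mufree g
  | PMu _ => False
  | _ => True end.

Lemma eval_sem A P : mufree P -> forall x, eval A P x (sem A P x).
Proof.
  induction P; simpl; intros HP x; try (constructor; fail); try tauto.
  - destruct HP; econstructor; eauto.
  - destruct HP; econstructor; eauto.
  - destruct HP as [H1 H2]. rewrite <- (pair_un x). rewrite unL_pair, unR_pair.
    generalize (unR x). induction n; simpl.
    + constructor; auto.
    + econstructor; eauto.
Qed.

Fixpoint subst (P q : prf) : prf :=
  match P with
  | POracle => q
  | PPair f g => PPair (subst f q) (subst g q)
  | PComp f g => PComp (subst f q) (subst g q)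
  | PRec f g => PRec (subst f q) (subst g q)
  | PMu f => PMu (subst f q)
  | _ => P end.

Lemma subst_eval (A B : nat -> bool) (q : prf) : (forall x, eval A q x (if B x then 1 else 0)) ->
  forall P x y, eval B P x y -> eval A (subst P q) x y.
Proof.
  intros Hq. fix IH 4. intros P x y H. destruct H; simpl.
  1-4: constructor.
  - apply Hq.
  - apply ev_pair; apply IH; assumption.
  - eapply ev_comp; apply IH; eassumption.
  - apply ev_rec0; apply IH; assumption.
  - eapply ev_recS. exact (IH _ _ _ H). apply IH; eassumption.
  - constructor. apply IH; auto. intros m Hm. destruct (H0 m Hm) as [k Hk]. exists k. apply IH; auto.
Qed.

Lemma subst_mufree P q : mufree P -> mufree q -> mufree (subst P q).
Proof. induction P; simpl; tauto. Qed.

Lemma natrec_ext F G F' G' : (forall x, F x = F' x) -> (forall x, G x = G' x) ->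
  forall x n, natrec F G x n = natrec F' G' x n.
Proof. intros HF HG x n. induction n; simpl; auto. rewrite IHn; auto. Qed.

Lemma subst_sem (A B : nat -> bool) (q : prf) : (forall x, sem A q x = if B x then 1 else 0) ->
  forall P x, mufree P -> sem A (subst P q) x = sem B P x.
Proof.
  intros Hq. induction P; simpl; intros x HP; auto; try tauto.
  - rewrite IHP1, IHP2; tauto.
  - rewrite IHP2, IHP1; tauto.
  - destruct HP as [H1 H2]. apply natrec_ext; auto.
Qed.

Lemma least_ex (Q : nat -> Prop) n : Q n -> exists m, Q m /\ forall k, k < m -> ~ Q k.
Proof.
  revert Q. induction n as [n IH] using lt_wf_ind. intros Q Hn.
  destruct (Classical_Prop.classic (exists k, k < n /\ Q k)) as [[k [Hk Qk]]|Hno].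
  - exact (IH k Hk Q Qk).
  - exists n. split; auto. intros k Hk Qk. apply Hno; eauto.
Qed.

Lemma eval_mu A P : mufree P -> forall x n, sem A P (pair x n) = 0 ->
  exists m, eval A (PMu P) x m /\ sem A P (pair x m) = 0.
Proof.
  intros HP x n Hn. destruct (least_ex (fun m => sem A P (pair x m) = 0) n Hn) as [m [Hm Hl]].
  exists m. split; auto. constructor.
  - rewrite <- Hm. apply eval_sem; auto.
  - intros k Hk. destruct (sem A P (pair x k)) eqn:E. exfalso; exact (Hl k Hk E).
    exists n0. rewrite <- E. apply eval_sem; auto.
Qed.

Definition b2n (b : bool) : nat := if b then 1 else 0.
Definition tt (n : nat) : bool := negb (n =? 0).
Lemma tt_b2n b : tt (b2n b) = b. Proof. destruct b; reflexivity. Qed.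

Fixpoint bex (P : nat -> bool) (n : nat) : bool :=
  match n with 0 => false | S m => bex P m || P m end.
Fixpoint ball (P : nat -> bool) (n : nat) : bool :=
  match n with 0 => true | S m => ball P m && P m end.
Fixpoint lastw (P : nat -> bool) (n : nat) : nat :=
  match n with 0 => 0 | S m => if P m then m else lastw P m end.
Fixpoint iterR (i L : nat) : nat := match i with 0 => L | S j => unR (iterR j L) end.
Definition nthL (L i : nat) : nat := unL (iterR i L).

Lemma bex_spec P n : bex P n = true <-> exists m, m < n /\ P m = true.
Proof.
  induction n; simpl. split; [discriminate| intros [m [Hm _]]; lia].
  rewrite Bool.orb_true_iff, IHn. split.
  - intros [[m [Hm Pm]]|Pn]; [exists m; split; auto; lia | exists n; auto].
  - intros [m [Hm Pm]]. destruct (Nat.eq_dec m n); [subst; auto| left; exists m; split; auto; lia].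
Qed.
Lemma ball_spec P n : ball P n = true <-> forall m, m < n -> P m = true.
Proof.
  induction n; simpl. split; auto; intros; lia.
  rewrite Bool.andb_true_iff, IHn. split.
  - intros [H1 H2] m Hm. destruct (Nat.eq_dec m n); [subst; auto| apply H1; lia].
  - intros H. split; auto.
Qed.
Lemma lastw_spec P n : (exists m, m < n /\ P m = true) -> lastw P n < n /\ P (lastw P n) = true.
Proof.
  induction n; simpl. intros [m [Hm _]]; lia.
  intros [m [Hm Pm]]. destruct (P n) eqn:E. split; auto.
  destruct (Nat.eq_dec m n). subst; congruence.
  destruct IHn as [H1 H2]. exists m; split; auto; lia. split; auto; lia.
Qed.
Lemma lastw_none P n : (forall m, m < n -> P m = false) -> lastw P n = 0.
Proof. induction n; simpl; auto. intros H. rewrite H by lia. apply IHn. intros; apply H; lia. Qed.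

Definition Id := PPair PLeft PRight.
Fixpoint Cn k := match k with 0 => PZero | S k => PComp PSucc (Cn k) end.
Definition PredP := PComp (PRec PZero (PComp PLeft PRight)) (PPair PZero Id).
Definition AddP := PRec Id (PComp PSucc (PComp PRight PRight)).
Definition SubP := PRec Id (PComp PredP (PComp PRight PRight)).
Definition IsZ := PComp (PRec (Cn 1) PZero) (PPair PZero Id).
Definition Not f := PComp IsZ f.
Definition Add f g := PComp AddP (PPair f g).
Definition Eq f g := PComp IsZ (Add (PComp SubP (PPair f g)) (PComp SubP (PPair g f))).
Definition And f g := Not (Add (Not f) (Not g)).
Definition Or f g := Not (Not (Add f g)).
Definition If b u v := PComp (PRec PRight (PComp PLeft PLeft)) (PPair (PPair u v) b).
Definition Bex body bound :=
  PComp (PRec PZero (Or (PComp PRight PRight) (PComp body (PPair PLeft (PComp PLeft PRight)))))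
        (PPair Id bound).
Definition Ball body bound :=
  PComp (PRec (Cn 1) (And (PComp PRight PRight) (PComp body (PPair PLeft (PComp PLeft PRight)))))
        (PPair Id bound).
Definition LastW body bound :=
  PComp (PRec PZero (If (PComp body (PPair PLeft (PComp PLeft PRight))) (PComp PLeft PRight) (PComp PRight PRight)))
        (PPair Id bound).
Definition Nth l i := PComp PLeft (PComp (PRec Id (PComp PRight (PComp PRight PRight))) (PPair l i)).

Section Sem.
Variable A : nat -> bool.
Ltac un := repeat (rewrite ?unL_pair, ?unR_pair).

Lemma s_Id x : sem A Id x = x. Proof. apply pair_un. Qed.
Lemma s_Cn k x : sem A (Cn k) x = k. Proof. induction k; simpl; auto. Qed.
Lemma s_Pred x : sem A PredP x = pred x.
Proof. unfold PredP. cbn [sem]. rewrite s_Id. un. destruct x; simpl; un; auto. Qed.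
Lemma s_AddP x : sem A AddP x = unL x + unR x.
Proof. unfold AddP. cbn [sem]. generalize (unR x). induction n; cbn [natrec sem]; un; rewrite ?s_Id; auto; rewrite IHn; lia. Qed.
Lemma s_SubP x : sem A SubP x = unL x - unR x.
Proof. unfold SubP. cbn [sem]. generalize (unR x). induction n; cbn [natrec sem]; un; rewrite ?s_Id, ?s_Pred; try lia; rewrite IHn; lia. Qed.
Lemma s_IsZ x : sem A IsZ x = b2n (x =? 0).
Proof. unfold IsZ. cbn [sem]. rewrite s_Id. un. destruct x; reflexivity. Qed.
Lemma s_Not f x : sem A (Not f) x = b2n (negb (tt (sem A f x))).
Proof. unfold Not, tt. cbn [sem]. rewrite s_IsZ. destruct (sem A f x); reflexivity. Qed.
Lemma s_Add f g x : sem A (Add f g) x = sem A f x + sem A g x.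
Proof. unfold Add. cbn [sem]. rewrite s_AddP. un. auto. Qed.
Lemma s_Eq f g x : sem A (Eq f g) x = b2n (sem A f x =? sem A g x).
Proof. unfold Eq. cbn [sem]. rewrite s_IsZ, s_Add. cbn [sem]. rewrite !s_SubP. un.
  destruct (sem A f x =? sem A g x) eqn:E. apply Nat.eqb_eq in E. rewrite E, Nat.sub_diag. reflexivity.
  apply Nat.eqb_neq in E. replace (sem A f x - sem A g x + (sem A g x - sem A f x) =? 0) with false; auto.
  symmetry; apply Nat.eqb_neq; lia. Qed.
Lemma s_And f g x : sem A (And f g) x = b2n (tt (sem A f x) && tt (sem A g x)).
Proof. unfold And. rewrite s_Not, s_Add, !s_Not. destruct (tt (sem A f x)), (tt (sem A g x)); reflexivity. Qed.
Lemma s_Or f g x : sem A (Or f g) x = b2n (tt (sem A f x) || tt (sem A g x)).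
Proof. unfold Or. rewrite !s_Not, s_Add. unfold tt. destruct (sem A f x), (sem A g x); reflexivity. Qed.
Lemma s_If b u v x : sem A (If b u v) x = if tt (sem A b x) then sem A u x else sem A v x.
Proof. unfold If, tt. cbn [sem]. un. destruct (sem A b x); simpl; un; auto. Qed.
Lemma s_Bex body bound x : sem A (Bex body bound) x = b2n (bex (fun m => tt (sem A body (pair x m))) (sem A bound x)).
Proof. unfold Bex. cbn [sem]. un. rewrite s_Id. generalize (sem A bound x). induction n; cbn [natrec bex]; auto.
  rewrite s_Or. cbn [sem]. un. rewrite IHn, tt_b2n. reflexivity. Qed.
Lemma s_Ball body bound x : sem A (Ball body bound) x = b2n (ball (fun m => tt (sem A body (pair x m))) (sem A bound x)).
Proof. unfold Ball. cbn [sem]. un. rewrite s_Id. generalize (sem A bound x). induction n; cbn [natrec ball]; auto.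
  rewrite s_And. cbn [sem]. un. rewrite IHn, tt_b2n. reflexivity. Qed.
Lemma s_LastW body bound x : sem A (LastW body bound) x = lastw (fun m => tt (sem A body (pair x m))) (sem A bound x).
Proof. unfold LastW. cbn [sem]. un. rewrite s_Id. generalize (sem A bound x). induction n; cbn [natrec lastw]; auto.
  rewrite s_If. cbn [sem]. un. rewrite IHn. reflexivity. Qed.
Lemma s_Nth l i x : sem A (Nth l i) x = nthL (sem A l x) (sem A i x).
Proof. unfold Nth, nthL. cbn [sem]. un. f_equal. generalize (sem A i x). induction n; cbn [natrec iterR]; un; rewrite ?s_Id; auto. Qed.
End Sem.

Lemma mf_Cn k : mufree (Cn k). Proof. induction k; simpl; tauto. Qed.
Ltac mf := unfold Not, Add, Eq, And, Or, If, Bex, Ball, LastW, Nth, Id, PredP, AddP, SubP, IsZ in *; simpl;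
  repeat split; auto; try apply mf_Cn.

From Stdlib Require Import Setoid Morphisms.
Section T.
Variable A : nat -> bool.
Lemma T_And f g x : tt (sem A (And f g) x) = true <-> tt (sem A f x) = true /\ tt (sem A g x) = true.
Proof. rewrite s_And, tt_b2n. apply Bool.andb_true_iff. Qed.
Lemma T_Or f g x : tt (sem A (Or f g) x) = true <-> tt (sem A f x) = true \/ tt (sem A g x) = true.
Proof. rewrite s_Or, tt_b2n. apply Bool.orb_true_iff. Qed.
Lemma T_Not f x : tt (sem A (Not f) x) = true <-> ~ tt (sem A f x) = true.
Proof. rewrite s_Not, tt_b2n. destruct (tt (sem A f x)); simpl; intuition congruence. Qed.
Lemma T_Eq f g x : tt (sem A (Eq f g) x) = true <-> sem A f x = sem A g x.
Proof. rewrite s_Eq, tt_b2n. apply Nat.eqb_eq. Qed.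
Lemma T_Bex b n x : tt (sem A (Bex b n) x) = true <-> exists m, m < sem A n x /\ tt (sem A b (pair x m)) = true.
Proof. rewrite s_Bex, tt_b2n. apply bex_spec. Qed.
Lemma T_Ball b n x : tt (sem A (Ball b n) x) = true <-> forall m, m < sem A n x -> tt (sem A b (pair x m)) = true.
Proof. rewrite s_Ball, tt_b2n. apply ball_spec. Qed.
End T.

Notation o := PComp.
Notation cL := PLeft.
Notation cR := PRight.

(* fields over R = pair L (pair i j) *)
Definition Lp := cL.
Definition Ip := o cL cR.
Definition Jp := o cR cR.
Definition Cp := o cL Jp.
Definition Xp := o cL (o cR Jp).
Definition Yp := o cR (o cR Jp).
Definition Tagp := o cL Cp.
Definition Argp := o cR Cp.

Definition MemAt (r V : prf) :=
  Bex (Eq (Nth (o cL (o r cL)) cR) (o V cL)) (o Ip r).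

Definition K0 (n : nat) (V : prf) := And (Eq Tagp (Cn n)) (And (Eq Argp (Cn 0)) (Eq Yp V)).
Definition K5 := And (Eq Tagp (Cn 5)) (And (MemAt Id (PPair (o cL Argp) (PPair Xp (o cL Yp))))
                                (MemAt Id (PPair (o cR Argp) (PPair Xp (o cR Yp))))).
Definition K6 := And (Eq Tagp (Cn 6)) (Bex
        (And (Eq (o cL (Nth (o Lp cL) cR)) (o (o cR Argp) cL))
        (And (Eq (o cL (o cR (Nth (o Lp cL) cR))) (o Xp cL))
             (MemAt cL (PPair (o (o cL Argp) cL) (PPair (o cR (o cR (Nth (o Lp cL) cR))) (o Yp cL))))))
        Ip).
Definition K7 := And (Eq Tagp (Cn 7)) (And (Eq (o cR Xp) (Cn 0)) (MemAt Id (PPair (o cL Argp) (PPair (o cL Xp) Yp)))).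
Definition K7b := And (Eq Tagp (Cn 7)) (And (Not (Eq (o cR Xp) (Cn 0))) (Bex
        (And (Eq (o cL (Nth (o Lp cL) cR)) (o Cp cL))
        (And (Eq (o cL (o cR (Nth (o Lp cL) cR))) (PPair (o (o cL Xp) cL) (o PredP (o (o cR Xp) cL))))
             (MemAt cL (PPair (o (o cR Argp) cL)
                 (PPair (PPair (o (o cL Xp) cL) (PPair (o PredP (o (o cR Xp) cL)) (o cR (o cR (Nth (o Lp cL) cR)))))
                        (o Yp cL))))))
        Ip)).
Definition K8 := And (Eq Tagp (Cn 8)) (And (MemAt Id (PPair Argp (PPair (PPair Xp Yp) (Cn 0))))
       (Ball (Bex
          (And (Eq (o cL (Nth (o Lp (o cL cL)) cR)) (o Argp (o cL cL)))
          (And (Eq (o cL (o cR (Nth (o Lp (o cL cL)) cR))) (PPair (o Xp (o cL cL)) (o cR cL)))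
               (Not (Eq (o cR (o cR (Nth (o Lp (o cL cL)) cR))) (Cn 0)))))
          (o Ip cL))
        Yp)).
Definition MemW (r V : prf) :=
  Bex (Eq (o cL (Nth (o cL (o r cL)) cR)) (PPair (Cn 9) (o V cL))) (o Ip r).
Definition KW1 := And (Eq Tagp (Cn 9)) (And (Eq (o cR Argp) (Cn 0)) (o SubP (PPair (Cn 5) (o cL Argp)))).
Definition KW2 := And (Eq Tagp (Cn 9)) (And (o SubP (PPair (o cL Argp) (Cn 4))) (And (o SubP (PPair (Cn 8) (o cL Argp)))
   (And (MemW Id (o cL (o cR Argp))) (MemW Id (o cR (o cR Argp)))))).
Definition KW3 := And (Eq Tagp (Cn 9)) (And (Eq (o cL Argp) (Cn 8)) (MemW Id (o cR Argp))).
Definition Just : prf :=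
  Or (K0 0 (Cn 0)) (Or (K0 1 (o PSucc Xp)) (Or (K0 2 (o cL Xp)) (Or (K0 3 (o cR Xp)) (Or (K0 4 (o POracle Xp))
  (Or K5 (Or K6 (Or K7 (Or K7b (Or K8 (Or KW1 (Or KW2 KW3))))))))))).

Lemma T_MemAt A r V u : tt (sem A (MemAt r V) u) = true <->
  exists m, m < unL (unR (sem A r u)) /\ nthL (unL (sem A r u)) m = sem A V u.
Proof. unfold MemAt. rewrite T_Bex. unfold Ip. cbn [sem].
  setoid_rewrite T_Eq. setoid_rewrite s_Nth. cbn [sem]. setoid_rewrite unL_pair. setoid_rewrite unR_pair. reflexivity. Qed.

Lemma T_MemW A r V u : tt (sem A (MemW r V) u) = true <->
  exists m, m < unL (unR (sem A r u)) /\ unL (nthL (unL (sem A r u)) m) = pair 9 (sem A V u).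
Proof. unfold MemW. rewrite T_Bex. unfold Ip. cbn [sem].
  setoid_rewrite T_Eq. cbn [sem]. setoid_rewrite s_Nth. setoid_rewrite s_Cn. cbn [sem]. setoid_rewrite unL_pair. setoid_rewrite unR_pair. reflexivity. Qed.
Lemma T_Sub A f g x : tt (sem A (o SubP (PPair f g)) x) = true <-> sem A g x < sem A f x.
Proof. cbn [sem]. rewrite s_SubP, unL_pair, unR_pair. unfold tt. destruct (sem A f x - sem A g x) eqn:E; simpl; split; intros; try lia; discriminate. Qed.

Definition justP (A : nat -> bool) (M : nat -> Prop) (j : nat) : Prop :=
 let c := unL j in let x := unL (unR j) in let y := unR (unR j) in
 let tag := unL c in let arg := unR c in
 (tag = 0 /\ arg = 0 /\ y = 0) \/ (tag = 1 /\ arg = 0 /\ y = S x) \/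
 (tag = 2 /\ arg = 0 /\ y = unL x) \/ (tag = 3 /\ arg = 0 /\ y = unR x) \/
 (tag = 4 /\ arg = 0 /\ y = (if A x then 1 else 0)) \/
 (tag = 5 /\ M (pair (unL arg) (pair x (unL y))) /\ M (pair (unR arg) (pair x (unR y)))) \/
 (tag = 6 /\ exists w, M (pair (unR arg) (pair x w)) /\ M (pair (unL arg) (pair w y))) \/
 (tag = 7 /\ unR x = 0 /\ M (pair (unL arg) (pair (unL x) y))) \/
 (tag = 7 /\ unR x <> 0 /\ exists r, M (pair c (pair (pair (unL x) (pred (unR x))) r)) /\
     M (pair (unR arg) (pair (pair (unL x) (pair (pred (unR x)) r)) y))) \/
 (tag = 8 /\ M (pair arg (pair (pair x y) 0)) /\
     forall m, m < y -> exists k, M (pair arg (pair (pair x m) (S k)))) \/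
 (tag = 9 /\ unR arg = 0 /\ unL arg < 5) \/
 (tag = 9 /\ 4 < unL arg /\ unL arg < 8 /\ (exists z, M (pair (pair 9 (unL (unR arg))) z)) /\
     (exists z, M (pair (pair 9 (unR (unR arg))) z))) \/
 (tag = 9 /\ unL arg = 8 /\ exists z, M (pair (pair 9 (unR arg)) z)).

Section J.
Variables (A : nat -> bool) (L i j : nat).
Let M := fun v => exists m, m < i /\ nthL L m = v.
Let R := pair L (pair i j).
Let c := unL j. Let x := unL (unR j). Let y := unR (unR j). Let tag := unL c. Let arg := unR c.
Ltac nrm := unfold Tagp, Argp, Cp, Xp, Yp, Jp, Ip, Lp, R in *; repeat progress (cbn [sem] in *; repeat rewrite ?s_Cn, ?unL_pair, ?unR_pair, ?s_Id, ?s_Pred, ?s_Nth in *).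
Lemma pair3 J : J = pair (unL J) (pair (unL (unR J)) (unR (unR J))).
Proof. rewrite !pair_un. auto. Qed.
Lemma J_K0 n V : tt (sem A (K0 n V) R) = true <-> tag = n /\ arg = 0 /\ y = sem A V R.
Proof. unfold K0. rewrite !T_And, !T_Eq. nrm. reflexivity. Qed.
Lemma J_K5 : tt (sem A K5 R) = true <-> tag = 5 /\ M (pair (unL arg) (pair x (unL y))) /\ M (pair (unR arg) (pair x (unR y))).
Proof. unfold K5. rewrite !T_And, !T_Eq, !T_MemAt. nrm. reflexivity. Qed.
Lemma J_K7 : tt (sem A K7 R) = true <-> tag = 7 /\ unR x = 0 /\ M (pair (unL arg) (pair (unL x) y)).
Proof. unfold K7. rewrite !T_And, !T_Eq, !T_MemAt. nrm. reflexivity. Qed.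
Lemma J_K6 : tt (sem A K6 R) = true <-> tag = 6 /\ exists w, M (pair (unR arg) (pair x w)) /\ M (pair (unL arg) (pair w y)).
Proof. unfold K6. rewrite !T_And, !T_Eq, T_Bex. nrm. unfold M, x, y, arg, tag, c in *.
  split; intros [Ht H]; split; auto.
  - destruct H as [m [Hm Hb]]. rewrite T_And, T_And, T_Eq, T_Eq, T_MemAt in Hb. nrm.
    destruct Hb as [H1 [H2 H3]]. exists (unR (unR (nthL L m))). split; auto.
    exists m. split; auto. rewrite (pair3 (nthL L m)) at 1. rewrite H1, H2. auto.
  - destruct H as [w [[m1 [Hm1 E1]] H2]]. exists m1. split; auto.
    rewrite T_And, T_And, T_Eq, T_Eq, T_MemAt. nrm. rewrite E1. nrm. auto.
Qed.
Lemma J_K7b : tt (sem A K7b R) = true <-> tag = 7 /\ unR x <> 0 /\ exists r, M (pair c (pair (pair (unL x) (pred (unR x))) r)) /\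
     M (pair (unR arg) (pair (pair (unL x) (pair (pred (unR x)) r)) y)).
Proof. unfold K7b. rewrite !T_And, T_Not, !T_Eq, T_Bex. nrm. unfold M, x, y, arg, tag, c in *.
  split; intros [Ht [Hn H]]; split; auto; split; auto.
  - destruct H as [m [Hm Hb]]. rewrite T_And, T_And, T_Eq, T_Eq, T_MemAt in Hb. nrm.
    destruct Hb as [H1 [H2 H3]]. exists (unR (unR (nthL L m))). split; auto.
    exists m. split; auto. rewrite (pair3 (nthL L m)) at 1. rewrite H1, H2. auto.
  - destruct H as [w [[m1 [Hm1 E1]] H2]]. exists m1. split; auto.
    rewrite T_And, T_And, T_Eq, T_Eq, T_MemAt. nrm. rewrite E1. nrm. auto.
Qed.
Lemma J_K8 : tt (sem A K8 R) = true <-> tag = 8 /\ M (pair arg (pair (pair x y) 0)) /\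
     forall m, m < y -> exists k, M (pair arg (pair (pair x m) (S k))).
Proof. unfold K8. rewrite !T_And, !T_Eq, T_MemAt, T_Ball. nrm. unfold M, x, y, arg, tag, c in *.
  split; intros [Ht [H0 H]]; split; auto; split; auto.
  - intros m Hm. specialize (H m Hm). rewrite T_Bex in H. nrm. destruct H as [m2 [Hm2 Hb]].
    rewrite T_And, T_And, T_Not, T_Eq, T_Eq, T_Eq in Hb. nrm.
    destruct Hb as [H1 [H2 H3]]. destruct (unR (unR (nthL L m2))) as [|k] eqn:Ek. tauto.
    exists k. exists m2. split; auto. rewrite (pair3 (nthL L m2)), H1, H2, Ek. auto.
  - intros m Hm. destruct (H m Hm) as [k [m2 [Hm2 E2]]]. rewrite T_Bex. nrm. exists m2. split; auto.
    rewrite T_And, T_And, T_Not, T_Eq, T_Eq, T_Eq. nrm. rewrite E2. nrm. repeat split; auto; discriminate.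
Qed.
Lemma MW e : (exists m, m < i /\ unL (nthL L m) = pair 9 e) <-> exists z, M (pair (pair 9 e) z).
Proof. unfold M. split.
  - intros [m [Hm E]]. exists (unR (nthL L m)). exists m. split; auto. rewrite <- E. symmetry; apply pair_un.
  - intros [z [m [Hm E]]]. exists m. split; auto. rewrite E. apply unL_pair. Qed.
Lemma J_KW1 : tt (sem A KW1 R) = true <-> tag = 9 /\ unR arg = 0 /\ unL arg < 5.
Proof. unfold KW1. rewrite !T_And, !T_Eq, T_Sub. nrm. reflexivity. Qed.
Lemma J_KW2 : tt (sem A KW2 R) = true <-> tag = 9 /\ 4 < unL arg /\ unL arg < 8 /\ (exists z, M (pair (pair 9 (unL (unR arg))) z)) /\
     (exists z, M (pair (pair 9 (unR (unR arg))) z)).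
Proof. unfold KW2. rewrite !T_And, !T_Eq, !T_Sub, !T_MemW. nrm. rewrite !MW. reflexivity. Qed.
Lemma J_KW3 : tt (sem A KW3 R) = true <-> tag = 9 /\ unL arg = 8 /\ exists z, M (pair (pair 9 (unR arg)) z).
Proof. unfold KW3. rewrite !T_And, !T_Eq, !T_MemW. nrm. rewrite !MW. reflexivity. Qed.
Lemma Just_spec : tt (sem A Just R) = true <-> justP A M j.
Proof.
  unfold Just, justP. rewrite !T_Or, !J_K0, J_K5, J_K6, J_K7, J_K7b, J_K8, J_KW1, J_KW2, J_KW3. nrm. unfold M, x, y, arg, tag, c in *.
  reflexivity.
Qed.
End J.
Opaque pair.

Inductive geval (A : nat -> bool) : nat -> nat -> nat -> Prop :=
| g0 x : geval A (pair 0 0) x 0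
| g1 x : geval A (pair 1 0) x (S x)
| g2 x : geval A (pair 2 0) x (unL x)
| g3 x : geval A (pair 3 0) x (unR x)
| g4 x : geval A (pair 4 0) x (if A x then 1 else 0)
| g5 a b x y1 y2 : geval A a x y1 -> geval A b x y2 -> geval A (pair 5 (pair a b)) x (pair y1 y2)
| g6 a b x w y : geval A b x w -> geval A a w y -> geval A (pair 6 (pair a b)) x y
| g7a a b x y : geval A a x y -> geval A (pair 7 (pair a b)) (pair x 0) y
| g7b a b x n r y : geval A (pair 7 (pair a b)) (pair x n) r -> geval A b (pair x (pair n r)) y ->
     geval A (pair 7 (pair a b)) (pair x (S n)) y
| g8 a x n : geval A a (pair x n) 0 -> (forall m, m < n -> exists k, geval A a (pair x m) (S k)) ->
     geval A (pair 8 a) x n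
| g9 d x y : (exists E, code E = d) -> geval A (pair 9 d) x y.

Lemma eval_geval A : forall E x y, eval A E x y -> geval A (code E) x y.
Proof.
  fix IH 4. intros E x y H. destruct H; simpl.
  - constructor. - constructor. - constructor. - constructor. - constructor.
  - apply g5; apply IH; assumption.
  - eapply g6; apply IH; eassumption.
  - apply g7a; apply IH; assumption.
  - eapply g7b. exact (IH _ _ _ H). apply IH; assumption.
  - apply g8. apply IH; assumption. intros m Hm. destruct (H0 m Hm) as [k Hk]. exists k. apply IH; assumption.
Qed.

Lemma pinj a b c d : pair a b = pair c d -> a = c /\ b = d.
Proof. apply pair_inj. Qed.

Lemma geval_eval A : forall c x y, geval A c x y -> forall E, code E = c -> eval A E x y.
Proof.
  fix IH 4. intros c x y H. destruct H; intros E HE; destruct E; simpl in HE;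
  apply pinj in HE; destruct HE as [HE1 HE2]; try discriminate;
  repeat match goal with H : pair _ _ = pair _ _ |- _ => apply pinj in H; destruct H end.
  - constructor. - constructor. - constructor. - constructor. - constructor.
  - apply ev_pair. exact (IH _ _ _ H _ H1). exact (IH _ _ _ H0 _ H2).
  - eapply ev_comp. exact (IH _ _ _ H _ H2). exact (IH _ _ _ H0 _ H1).
  - apply ev_rec0. exact (IH _ _ _ H _ H0).
  - eapply ev_recS. refine (IH _ _ _ H _ _). simpl. subst; reflexivity. exact (IH _ _ _ H0 _ H2).
  - apply ev_mu. exact (IH _ _ _ H _ HE2). intros m Hm. destruct (H0 m Hm) as [k Hk]. exists k. exact (IH _ _ _ Hk _ HE2).
Qed.

Definition G A v := geval A (unL v) (unL (unR v)) (unR (unR v)).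
Lemma G_pair A c x y : G A (pair c (pair x y)) <-> geval A c x y.
Proof. unfold G. repeat rewrite ?unR_pair, ?unL_pair. reflexivity. Qed.

Lemma code_tag E : unL (code E) < 9.
Proof. destruct E; simpl; rewrite unL_pair; lia. Qed.

Lemma geval9 A d x y : geval A (pair 9 d) x y -> exists E, code E = d.
Proof. intro H. inversion H; subst;
  repeat match goal with H : pair _ _ = pair _ _ |- _ => apply pinj in H; destruct H end; try discriminate; subst; auto. Qed.

Lemma justP_sound A (M : nat -> Prop) j : (forall v, M v -> G A v) -> justP A M j -> G A j.
Proof.
  intros HM H. unfold justP in H. cbv zeta in H. unfold G.
  set (c := unL j) in *. set (x := unL (unR j)) in *. set (y := unR (unR j)) in *.
  clearbody c x y. rewrite <- (pair_un c) in *. set (t := unL c) in *. set (a := unR c) in *. clearbody t a.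
  rewrite ?unL_pair, ?unR_pair in *.
  assert (HG : forall c x y, M (pair c (pair x y)) -> geval A c x y) by (intros; apply G_pair; auto).
  destruct H as [[-> [-> ->]]|[[-> [-> ->]]|[[-> [-> ->]]|[[-> [-> ->]]|[[-> [-> ->]]|H]]]]]; try constructor.
  destruct H as [[-> [H1 H2]]|[[-> [w [H1 H2]]]|[[-> [H0 H1]]|[[-> [H0 [r [H1 H2]]]]|H]]]].
  - rewrite <- (pair_un a), <- (pair_un y). apply g5; auto.
  - rewrite <- (pair_un a). eapply g6; eauto.
  - rewrite <- (pair_un a), <- (pair_un x), H0. apply g7a; auto.
  - rewrite <- (pair_un a) in *. rewrite <- (pair_un x). destruct (unR x) as [|n] eqn:En. lia.
    simpl in *. rewrite unR_pair in H2. eapply g7b; eauto.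
  - destruct H as [[-> [H1 H2]]|H].
    + apply g8; auto. intros m Hm. destruct (H2 m Hm) as [k Hk]. exists k; auto.
    + assert (W : forall e z, M (pair (pair 9 e) z) -> exists E, code E = e).
      { intros e z Hz. apply (HM _) in Hz. unfold G in Hz. rewrite unL_pair in Hz. eapply geval9; eauto. }
      destruct H as [[-> [H1 H2]]|[[-> [H1 [H2 [[z1 Z1] [z2 Z2]]]]]|[-> [H1 [z Z]]]]]; apply g9.
      * rewrite <- (pair_un a), H1.
        destruct (unL a) as [|[|[|[|[|]]]]] eqn:Ea; try lia.
        exists PZero; reflexivity. exists PSucc; reflexivity. exists PLeft; reflexivity.
        exists PRight; reflexivity. exists POracle; reflexivity.
      * destruct (W _ _ Z1) as [E1 HE1]. destruct (W _ _ Z2) as [E2 HE2].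
        rewrite <- (pair_un a), <- (pair_un (unR a)), <- HE1, <- HE2.
        destruct (unL a) as [|[|[|[|[|[|[|[|]]]]]]]] eqn:Ea; try lia.
        exists (PPair E1 E2); reflexivity. exists (PComp E1 E2); reflexivity. exists (PRec E1 E2); reflexivity.
      * destruct (W _ _ Z) as [E1 HE1]. exists (PMu E1). simpl. rewrite <- (pair_un a), H1, HE1. reflexivity.
Qed.

Definition Valid := Ball (o Just (PPair (o cR cL) (PPair cR (Nth (o cR cL) cR)))) cL.

Lemma valid_spec A t : tt (sem A Valid t) = true <->
  forall i, i < unL t -> justP A (fun v => exists m, m < i /\ nthL (unR t) m = v) (nthL (unR t) i).
Proof.
  unfold Valid. rewrite T_Ball. cbn [sem]. split; intros H i Hi; specialize (H i Hi);
  rewrite s_Nth in *; cbn [sem] in *; repeat rewrite ?unL_pair, ?unR_pair in *;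
  apply Just_spec; auto.
Qed.

Lemma valid_sound A t : tt (sem A Valid t) = true -> forall i, i < unL t -> G A (nthL (unR t) i).
Proof.
  intros H. pose proof (proj1 (valid_spec A t) H) as H1. clear H. induction i as [i IH] using lt_wf_ind. intros Hi.
  apply (justP_sound A (fun v => exists m, m < i /\ nthL (unR t) m = v)); auto.
  intros v [m [Hm <-]]. apply IH; lia.
Qed.

Fixpoint encL (l : list nat) : nat := match l with nil => 0 | a :: l => pair a (encL l) end.
Lemma iterR_S j L : iterR (S j) L = iterR j (unR L).
Proof. induction j; simpl in *; [reflexivity | rewrite IHj; reflexivity]. Qed.
Lemma nthL_enc l m : m < length l -> nthL (encL l) m = nth m l 0.
Proof.
  revert m; induction l; simpl; intros m Hm. lia.
  destruct m; unfold nthL in *; simpl. rewrite unL_pair; auto.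
  rewrite <- IHl by lia. change (unR (iterR m (pair a (encL l)))) with (iterR (S m) (pair a (encL l))). rewrite iterR_S, unR_pair. reflexivity.
Qed.

Lemma justP_mono A (M M' : nat -> Prop) j : (forall v, M v -> M' v) -> justP A M j -> justP A M' j.
Proof.
  intros HM H. unfold justP in *. cbv zeta in *.
  repeat match type of H with _ \/ _ => destruct H as [H|H] end;
  [left|right;left|do 2 right;left|do 3 right;left|do 4 right;left|do 5 right;left|do 6 right;left
  |do 7 right;left|do 8 right;left|do 9 right;left|do 10 right;left|do 11 right;left|do 12 right];
  firstorder.
Qed.

Definition goodL A (l : list nat) :=
  forall i, i < length l -> justP A (fun v => exists m, m < i /\ nth m l 0 = v) (nth i l 0).

Lemma goodL_valid A l : goodL A l -> tt (sem A Valid (pair (length l) (encL l))) = true.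
Proof.
  intros H. apply valid_spec. rewrite unL_pair, unR_pair. intros i Hi.
  rewrite nthL_enc by auto. eapply justP_mono; [|apply H; auto].
  intros v [m [Hm E]]. exists m. split; auto. rewrite nthL_enc by lia. auto.
Qed.

Lemma goodL_app A l1 l2 : goodL A l1 -> goodL A l2 -> goodL A (l1 ++ l2).
Proof.
  intros H1 H2 i Hi. rewrite length_app in Hi.
  destruct (Nat.lt_ge_cases i (length l1)) as [Hl|Hl].
  - rewrite app_nth1 by auto. eapply justP_mono; [|apply H1; auto].
    intros v [m [Hm E]]. exists m. split; auto. rewrite app_nth1 by lia. auto.
  - rewrite app_nth2 by auto. eapply justP_mono; [|apply H2; lia].
    intros v [m [Hm E]]. exists (length l1 + m). split. lia. rewrite app_nth2 by lia.
    replace (length l1 + m - length l1) with m by lia. auto.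
Qed.

Lemma goodL_snoc A l j : goodL A l -> justP A (fun v => In v l) j -> goodL A (l ++ j :: nil).
Proof.
  intros H1 H2 i Hi. rewrite length_app in Hi. simpl in Hi.
  destruct (Nat.lt_ge_cases i (length l)) as [Hl|Hl].
  - rewrite app_nth1 by auto. eapply justP_mono; [|apply H1; auto].
    intros v [m [Hm E]]. exists m. split; auto. rewrite app_nth1 by lia. auto.
  - assert (i = length l) by lia. subst. rewrite app_nth2 by lia. rewrite Nat.sub_diag. simpl.
    eapply justP_mono; [|exact H2]. intros v Hv. apply In_nth with (d := 0) in Hv.
    destruct Hv as [m [Hm E]]. exists m. split; auto. rewrite app_nth1 by lia. auto.
Qed.

Lemma goodL_nil A : goodL A nil.
Proof. intros i Hi. simpl in Hi. lia. Qed.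

Tactic Notation "jp" int(n) := unfold justP; cbv zeta; repeat rewrite ?unL_pair, ?unR_pair;
  do n right; try left.

Lemma compl A : forall E x y, eval A E x y -> exists l, goodL A l /\ In (pair (code E) (pair x y)) l.
Proof.
  fix IH 4. intros E x y H. destruct H; simpl.
  - exists (pair (pair 0 0) (pair x 0) :: nil). split; [|left; auto].
    apply (goodL_snoc A nil). apply goodL_nil. jp 0. auto.
  - exists (pair (pair 1 0) (pair x (S x)) :: nil). split; [|left; auto].
    apply (goodL_snoc A nil). apply goodL_nil. jp 1. auto.
  - exists (pair (pair 2 0) (pair x (unL x)) :: nil). split; [|left; auto].
    apply (goodL_snoc A nil). apply goodL_nil. jp 2. auto.
  - exists (pair (pair 3 0) (pair x (unR x)) :: nil). split; [|left; auto].
    apply (goodL_snoc A nil). apply goodL_nil. jp 3. auto.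
  - exists (pair (pair 4 0) (pair x (if A x then 1 else 0)) :: nil). split; [|left; auto].
    apply (goodL_snoc A nil). apply goodL_nil. jp 4. auto.
  - destruct (IH _ _ _ H) as [l1 [G1 I1]]. destruct (IH _ _ _ H0) as [l2 [G2 I2]].
    exists ((l1 ++ l2) ++ pair (pair 5 (pair (code f) (code g))) (pair x (pair a b)) :: nil).
    split; [|apply in_or_app; right; left; auto].
    apply goodL_snoc. apply goodL_app; auto. jp 5. split; auto.
    split; apply in_or_app; auto.
  - destruct (IH _ _ _ H) as [l1 [G1 I1]]. destruct (IH _ _ _ H0) as [l2 [G2 I2]].
    exists ((l1 ++ l2) ++ pair (pair 6 (pair (code f) (code g))) (pair x z) :: nil).
    split; [|apply in_or_app; right; left; auto].
    apply goodL_snoc. apply goodL_app; auto. jp 6. split; auto.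
    exists y. split; apply in_or_app; auto.
  - destruct (IH _ _ _ H) as [l1 [G1 I1]].
    exists (l1 ++ pair (pair 7 (pair (code f) (code g))) (pair (pair x 0) y) :: nil).
    split; [|apply in_or_app; right; left; auto].
    apply goodL_snoc; auto. jp 7. auto.
  - destruct (IH _ _ _ H) as [l1 [G1 I1]]. destruct (IH _ _ _ H0) as [l2 [G2 I2]].
    exists ((l1 ++ l2) ++ pair (pair 7 (pair (code f) (code g))) (pair (pair x (S n)) z) :: nil).
    split; [|apply in_or_app; right; left; auto].
    apply goodL_snoc. apply goodL_app; auto. jp 8. split; auto. split. lia. simpl.
    exists y. split; apply in_or_app; auto.
  - destruct (IH _ _ _ H) as [l1 [G1 I1]].
    assert (Hall : forall n', n' <= n -> exists l, goodL A l /\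
        forall m, m < n' -> exists k, In (pair (code f) (pair (pair x m) (S k))) l).
    { induction n' as [|n' IHn]; intros Hn'.
      - exists nil. split. apply goodL_nil. intros; lia.
      - destruct IHn as [l2 [G2 I2]]. lia.
        destruct (H0 n' ltac:(lia)) as [k Hk]. destruct (IH _ _ _ Hk) as [l3 [G3 I3]].
        exists (l2 ++ l3). split. apply goodL_app; auto.
        intros m Hm. destruct (Nat.eq_dec m n'). subst. exists k. apply in_or_app; auto.
        destruct (I2 m ltac:(lia)) as [k' Hk']. exists k'. apply in_or_app; auto. }
    destruct (Hall n (le_n n)) as [l2 [G2 I2]].
    exists ((l1 ++ l2) ++ pair (pair 8 (code f)) (pair x n) :: nil).
    split; [|apply in_or_app; right; left; auto].
    apply goodL_snoc. apply goodL_app; auto. jp 9. split; auto. split. apply in_or_app; auto.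
    intros m Hm. destruct (I2 m Hm) as [k Hk]. exists k. apply in_or_app; auto.
Qed.

Lemma compl_wf A : forall E, exists l, goodL A l /\ In (pair (pair 9 (code E)) 0) l.
Proof.
  induction E; simpl.
  1-5: match goal with |- exists l, _ /\ In ?j l =>
    exists (j :: nil); split; [apply (goodL_snoc A nil); [apply goodL_nil| jp 10; repeat split; lia] | left; reflexivity] end.
  1-3: destruct IHE1 as [l1 [G1 I1]]; destruct IHE2 as [l2 [G2 I2]];
    match goal with |- exists l, _ /\ In ?j l =>
    exists ((l1 ++ l2) ++ j :: nil); split; [apply goodL_snoc; [apply goodL_app; auto | jp 11;
      repeat split; try lia; eexists; apply in_or_app; eauto] | apply in_or_app; right; left; reflexivity] end.
  destruct IHE as [l1 [G1 I1]].
  match goal with |- exists l, _ /\ In ?j l =>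
  exists (l1 ++ j :: nil); split; [apply goodL_snoc; auto; jp 12; repeat split; eauto | apply in_or_app; right; left; reflexivity] end.
Qed.
Opaque pair.

Lemma unL_le n : unL n <= n. Proof. rewrite <- (pair_un n) at 2. pose proof (pair_le (unL n) (unR n)). lia. Qed.
Lemma unR_le n : unR n <= n. Proof. rewrite <- (pair_un n) at 2. pose proof (pair_le (unL n) (unR n)). lia. Qed.
Lemma iterR_le i L : iterR i L <= L. Proof. induction i; simpl; auto. pose proof (unR_le (iterR i L)); lia. Qed.

Definition WP := Bex (And (o Valid cR) (Bex (Eq (Nth (o cR (o cR cL)) cR) (o cL (o cL cL))) (o cL cR))) cR.
Definition Wp A q s := exists t, t < s /\ tt (sem A Valid t) = true /\ exists i, i < unL t /\ nthL (unR t) i = q.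

Lemma WP_spec A q s : tt (sem A WP (pair q s)) = true <-> Wp A q s.
Proof.
  unfold WP, Wp. rewrite T_Bex. cbn [sem]. rewrite unR_pair. split; intros [t [Ht H]]; exists t; split; auto.
  - rewrite T_And, T_Bex in H. cbn [sem] in H. repeat rewrite ?unL_pair, ?unR_pair in H. destruct H as [H1 [i [Hi H2]]].
    split; auto. exists i; split; auto. rewrite T_Eq, s_Nth in H2. cbn [sem] in H2.
    repeat rewrite ?unL_pair, ?unR_pair in H2. auto.
  - destruct H as [H1 [i [Hi H2]]]. rewrite T_And, T_Bex. cbn [sem]. repeat rewrite ?unL_pair, ?unR_pair. split; auto.
    exists i. split; auto. rewrite T_Eq, s_Nth. cbn [sem]. repeat rewrite ?unL_pair, ?unR_pair. auto.
Qed.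

Lemma Wp_mono A q s s' : s <= s' -> Wp A q s -> Wp A q s'.
Proof. intros H [t [Ht R]]. exists t. split; auto. lia. Qed.

Lemma Wp_sound A e x y s : Wp A (pair e (pair x y)) s -> geval A e x y.
Proof.
  intros [t [Ht [V [i [Hi E]]]]]. pose proof (valid_sound A t V i Hi) as HG. rewrite E in HG.
  unfold G in HG. repeat rewrite ?unL_pair, ?unR_pair in HG. exact HG.
Qed.

Lemma Wp_bound A e x y s : Wp A (pair e (pair x y)) s -> y < s.
Proof.
  intros [t [Ht [V [i [Hi E]]]]].
  assert (nthL (unR t) i <= t). { unfold nthL. pose proof (unL_le (iterR i (unR t))). pose proof (iterR_le i (unR t)).
    pose proof (unR_le t). lia. }
  rewrite E in H. pose proof (pair_le e (pair x y)). pose proof (pair_le x y). lia.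
Qed.

Lemma goodL_in A l j : goodL A l -> In j l -> exists t, tt (sem A Valid t) = true /\ exists i, i < unL t /\ nthL (unR t) i = j.
Proof.
  intros G I. exists (pair (length l) (encL l)). split. apply goodL_valid; auto.
  apply In_nth with (d := 0) in I. destruct I as [i [Hi E]]. exists i. rewrite unL_pair, unR_pair.
  split; auto. rewrite nthL_enc; auto.
Qed.

Lemma Wp_compl A E x y : eval A E x y -> exists s, Wp A (pair (code E) (pair x y)) s.
Proof.
  intros H. destruct (compl A E x y H) as [l [G I]]. destruct (goodL_in A l _ G I) as [t [V R]].
  exists (S t). exists t. split; auto.
Qed.

Definition H0P := Bex (And (o Valid cR) (And
   (Bex (And (Eq (o cL (Nth (o cR (o cR cL)) cR)) (o cL (o cL cL))) (Eq (o cL (o cR (Nth (o cR (o cR cL)) cR))) (o cL (o cL cL)))) (o cL cR))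
   (Bex (Eq (o cL (Nth (o cR (o cR cL)) cR)) (PPair (Cn 9) (o cL (o cL cL)))) (o cL cR)))) cR.
Definition H0p A n s := exists t, t < s /\ tt (sem A Valid t) = true /\
   (exists i, i < unL t /\ unL (nthL (unR t) i) = n /\ unL (unR (nthL (unR t) i)) = n) /\
   (exists i, i < unL t /\ unL (nthL (unR t) i) = pair 9 n).

Ltac nr := repeat progress (cbn [sem] in *; repeat rewrite ?s_Nth, ?s_Cn, ?unL_pair, ?unR_pair in *).
Ltac nrg := repeat progress (cbn [sem]; repeat rewrite ?s_Nth, ?s_Cn, ?unL_pair, ?unR_pair).
Lemma H0P_spec A n s : tt (sem A H0P (pair n s)) = true <-> H0p A n s.
Proof.
  unfold H0P, H0p. rewrite T_Bex. cbn [sem]. rewrite unR_pair. split; intros [t [Ht H]]; exists t; split; auto.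
  - rewrite !T_And, !T_Bex in H. nr.
    destruct H as [H1 [[i [Hi H2]] [i' [Hi' H3]]]]. split; auto.
    rewrite T_And, !T_Eq in H2. rewrite T_Eq in H3. nr. split; eauto.
  - destruct H as [H1 [[i [Hi H2]] [i' [Hi' H3]]]]. rewrite !T_And, !T_Bex. nrg.
    split; auto. split; [exists i|exists i']; split; auto.
    + rewrite T_And, !T_Eq. nrg. auto.
    + rewrite T_Eq. nrg. auto.
Qed.

Lemma H0p_mono A n s s' : s <= s' -> H0p A n s -> H0p A n s'.
Proof. intros H [t [Ht R]]. exists t. split; auto. lia. Qed.

Lemma H0p_sound n s : H0p empty_set n s -> in_jump0 n.
Proof.
  intros [t [Ht [V [[i [Hi [E1 E2]]] [i' [Hi' E3]]]]]].
  pose proof (valid_sound _ t V i Hi) as G1. pose proof (valid_sound _ t V i' Hi') as G2.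
  unfold G in G1, G2. rewrite E3 in G2. apply geval9 in G2. destruct G2 as [E HE].
  rewrite E1, E2 in G1. exists E. split; auto. exists (unR (unR (nthL (unR t) i))).
  eapply geval_eval; eauto.
Qed.

Lemma H0p_compl n : in_jump0 n -> exists s, H0p empty_set n s.
Proof.
  intros [E [HE [y Hy]]]. destruct (compl _ E n y Hy) as [l1 [G1 I1]].
  destruct (compl_wf empty_set E) as [l2 [G2 I2]].
  pose proof (goodL_app _ _ _ G1 G2) as G.
  exists (S (pair (length (l1 ++ l2)) (encL (l1 ++ l2)))).
  exists (pair (length (l1 ++ l2)) (encL (l1 ++ l2))). split; auto. split. apply goodL_valid; auto.
  rewrite unL_pair, unR_pair.
  assert (I1' : In (pair (code E) (pair n y)) (l1 ++ l2)) by (apply in_or_app; auto).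
  assert (I2' : In (pair (pair 9 (code E)) 0) (l1 ++ l2)) by (apply in_or_app; auto).
  apply In_nth with (d := 0) in I1'. apply In_nth with (d := 0) in I2'.
  destruct I1' as [i [Hi Ei]]. destruct I2' as [i' [Hi' Ei']]. split.
  - exists i. rewrite nthL_enc, Ei by auto. repeat rewrite ?unL_pair, ?unR_pair. auto.
  - exists i'. rewrite nthL_enc, Ei' by auto. rewrite unL_pair. subst. auto.
Qed.
Opaque pair.

Lemma mf_And f g : mufree f -> mufree g -> mufree (And f g).
Proof. intros; unfold And, Not, Add, IsZ, AddP, Id; simpl; tauto. Qed.
Lemma mf_Not f : mufree f -> mufree (Not f).
Proof. intros; unfold Not, IsZ, Id; simpl; tauto. Qed.
Lemma mf_Bex f g : mufree f -> mufree g -> mufree (Bex f g).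
Proof. intros; unfold Bex, Or, Not, Add, IsZ, AddP, Id; simpl; tauto. Qed.
Lemma mf_LastW f g : mufree f -> mufree g -> mufree (LastW f g).
Proof. intros; unfold LastW, If, Id; simpl; tauto. Qed.
Lemma mf_WP : mufree WP. Proof. cbv. tauto. Qed.
Lemma mf_H0P : mufree H0P. Proof. cbv. tauto. Qed.

Definition CB := And (o POracle cL) (Not (subst H0P PZero)).
Definition FB := LastW (o WP (PPair (PPair (o cL (o cL cL)) (PPair (o cL cL) cR)) (o cR cL))) cR.
Definition HB e := Not (Bex (o WP (PPair (PPair (Cn e) (PPair (PPair (Cn e) (o cL cL)) cR)) (o cR cL))) cR).

Lemma mf_CB : mufree CB.
Proof. unfold CB. apply mf_And. simpl; tauto. apply mf_Not. apply subst_mufree. apply mf_H0P. simpl; auto. Qed.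
Lemma mf_FB : mufree FB.
Proof. unfold FB. apply mf_LastW; simpl; repeat split; auto using mf_WP. Qed.
Lemma mf_HB e : mufree (HB e).
Proof. unfold HB. apply mf_Not. apply mf_Bex; simpl; repeat split; auto using mf_WP, mf_Cn. Qed.

Lemma choice_fun (P : nat -> nat -> Prop) : (forall n, exists s, P n s) -> exists c, forall n, P n (c n).
Proof. intros H. exists (fun n => proj1_sig (constructive_indefinite_description _ (H n))).
  intros n. apply proj2_sig. Qed.

Lemma jump0_spec n : jump0 n = true <-> in_jump0 n.
Proof. unfold jump0. destruct (excluded_middle_informative (in_jump0 n)); split; auto; discriminate. Qed.

Lemma sem_H0e A x : sem A (subst H0P PZero) x = sem empty_set H0P x.
Proof. apply subst_sem. intros; reflexivity. apply mf_H0P. Qed.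

Lemma tt_false n : tt n = false -> n = 0.
Proof. unfold tt. destruct n; simpl; auto; discriminate. Qed.

Lemma H0P_b2n A x : sem A H0P x = b2n (tt (sem A H0P x)).
Proof. unfold H0P. rewrite s_Bex, tt_b2n. reflexivity. Qed.

Theorem theorem6 :
  forall X : nat -> bool,
    Delta02_set X ->
    ~ turing_red jump0 X ->
    exists f : nat -> nat,
      Delta02_fun f /\
      forall g : nat -> nat, computable_in X g -> ~ diagonalizing f g.
Proof.
  intros X [p Hp] Hnot.
  assert (Hc : forall n, exists s, eval jump0 (PMu CB) n s /\ sem jump0 CB (pair n s) = 0).
  { intros n. destruct (jump0 n) eqn:Ej.
    - destruct (H0p_compl n (proj1 (jump0_spec n) Ej)) as [s Hs].
      apply (eval_mu _ _ mf_CB n s). unfold CB. rewrite s_And, s_Not, sem_H0e.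
      change (sem jump0 (o POracle cL) (pair n s)) with (if jump0 (unL (pair n s)) then 1 else 0).
      rewrite unL_pair, Ej, tt_b2n, (proj2 (H0P_spec _ _ _) Hs). reflexivity.
    - apply (eval_mu _ _ mf_CB n 0). unfold CB. rewrite s_And.
      change (sem jump0 (o POracle cL) (pair n 0)) with (if jump0 (unL (pair n 0)) then 1 else 0).
      rewrite unL_pair, Ej. reflexivity. }
  destruct (choice_fun _ Hc) as [c Hc'].
  exists (fun z => sem X FB (pair z (c (unR z)))). split.
  { exists (PComp (subst FB p) (PPair Id (o (PMu CB) cR))). intros z.
    eapply ev_comp.
    - apply ev_pair. pose proof (eval_sem jump0 Id ltac:(simpl; tauto) z) as E. rewrite s_Id in E. exact E.
      eapply ev_comp. apply ev_right. apply (Hc' (unR z)).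
    - eapply subst_eval. exact Hp. apply eval_sem. apply mf_FB. }
  intros g [E HE] Hdiag. set (e := code E).
  assert (K : forall n y, ~ Wp X (pair e (pair (pair e n) y)) (c n)).
  { intros n y HW. apply (Hdiag (pair e n)).
    pose proof (Wp_bound _ _ _ _ _ HW) as Hy.
    unfold FB. rewrite s_LastW. cbn [sem]. rewrite !unR_pair.
    match goal with |- _ = lastw ?P ?B =>
      destruct (lastw_spec P B) as [Hl HP]; [exists y; split; auto | ] end.
    { cbv beta. repeat rewrite ?unL_pair, ?unR_pair. apply WP_spec. auto. }
    cbv beta in HP. repeat rewrite ?unL_pair, ?unR_pair in HP. apply WP_spec, Wp_sound in HP.
    pose proof (geval_eval _ _ _ _ HP E eq_refl) as HP2.
    symmetry. apply (eval_det _ _ _ _ HP2). apply HE. }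
  assert (Hh : forall n, exists s, eval X (PMu (HB e)) n s /\ sem X (HB e) (pair n s) = 0).
  { intros n. destruct (Wp_compl X E (pair e n) (g (pair e n)) (HE _)) as [s Hs].
    apply (eval_mu _ _ (mf_HB e) n s). unfold HB. rewrite s_Not, s_Bex. rewrite tt_b2n.
    replace (sem X cR (pair n s)) with s by (cbn [sem]; symmetry; apply unR_pair).
    match goal with |- context [bex ?P s] => assert (B : bex P s = true) end.
    { apply bex_spec. exists (g (pair e n)). split. eapply Wp_bound; eauto.
      cbn [sem]. rewrite s_Cn. repeat rewrite ?unL_pair, ?unR_pair. apply WP_spec. exact Hs. }
    rewrite B. reflexivity. }
  destruct (choice_fun _ Hh) as [h Hh'].
  assert (Hlt : forall n, c n < h n).
  { intros n. destruct (Hh' n) as [_ H0]. unfold HB in H0. rewrite s_Not in H0.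
    destruct (tt (sem X (Bex _ _) (pair n (h n)))) eqn:Eb; [|discriminate].
    apply T_Bex in Eb. destruct Eb as [y [Hy Hb]]. nr. apply WP_spec in Hb.
    destruct (Nat.lt_ge_cases (c n) (h n)) as [Hl|Hl]; auto.
    exfalso. apply (K n y). eapply Wp_mono; eauto. }
  apply Hnot. exists (PComp (subst H0P PZero) (PPair Id (PMu (HB e)))). intros n.
  eapply ev_comp.
  - apply ev_pair. pose proof (eval_sem X Id ltac:(simpl; tauto) n) as Ei. rewrite s_Id in Ei. exact Ei.
    apply (Hh' n).
  - replace (if jump0 n then 1 else 0) with (sem X (subst H0P PZero) (pair n (h n))).
    apply eval_sem. apply subst_mufree. apply mf_H0P. simpl; auto.
    rewrite sem_H0e, H0P_b2n. change (b2n (tt (sem empty_set H0P (pair n (h n)))) = b2n (jump0 n)). f_equal.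
    destruct (jump0 n) eqn:Ej.
    + destruct (Hc' n) as [_ H0]. unfold CB in H0. rewrite s_And, s_Not, sem_H0e in H0.
      change (sem jump0 (o POracle cL) (pair n (c n))) with (if jump0 (unL (pair n (c n))) then 1 else 0) in H0.
      rewrite unL_pair, Ej, tt_b2n in H0.
      destruct (tt (sem empty_set H0P (pair n (c n)))) eqn:E2; [|simpl in H0; discriminate].
      apply H0P_spec. apply H0P_spec in E2. eapply H0p_mono; [|exact E2]. specialize (Hlt n). lia.
    + destruct (tt (sem empty_set H0P (pair n (h n)))) eqn:E2; auto.
      apply H0P_spec, H0p_sound in E2. apply jump0_spec in E2. congruence.
Qed.
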